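(* $G$ contains an edge $uv$ such that $u \notin Z$ and $v \notin Z$.
   Context: $(G,k,t,T_1,T_2)$ is an instance of the Cheap Coloring Extension problem ($G$ bipartite, $T_1,T_2$ disjoint vertex sets with $|T_1|+|T_2|\le t$). A set $X\subseteq V(G)$ is well-connected if for all $X_1,X_2\subseteq X$ with $|X_1|=|X_2|\le |X|/2$ there are $|X_1|$ vertex-disjoint paths in $G$ with one endpoint in $X_1$ and the other in $X_2$; $Y$ is a well-connected set in $G$ of size at least $2(4k^2)\, t\, 4^{4k^2}+2$. Let $G^*$ be obtained from $G$ by adding a new vertex $y^*$ adjacent to all vertices of $Y$. For vertices $x,y$, a set $X$ is $(x,y)$-important if $x\in X$, $y\notin X$, $G^*[X]$ is connected, and there is no $X'\supset X$ with $y\notin X'$, $G^*[X']$ connected and $d_{G^*}(X')\le d_{G^*}(X)$, where $d_{G^*}(X)$ is the number of edges of $G^*$ with exactly one endpoint in $X$. $Z$ is the union of all $(x,y^* )$-important sets $X$ in $G^*$ with $d_{G^*}(X)\le 4k^2$, over all $x\in T_1\cup T_2$. *)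

(* Defs.v *)
From mathcomp Require Import all_boot.
Set Implicit Arguments. Unset Strict Implicit. Unset Printing Implicit Defensive.

Section Graphs.
Variable V : finType.

Definition simple_graph (e : rel V) : Prop := irreflexive e /\ symmetric e.

Definition bipartite (e : rel V) : Prop :=
  exists f : V -> bool, forall u v, e u v -> f u != f v.

(* a path is given by its first vertex and the sequence of remaining vertices *)
Definition is_path (e : rel V) (p : V * seq V) : bool :=
  path e p.1 p.2 && uniq (p.1 :: p.2).

Definition pverts (p : V * seq V) : seq V := p.1 :: p.2.

Definition pend (p : V * seq V) : V := last p.1 p.2.

Definition well_connected (e : rel V) (X : {set V}) : Prop :=
  forall X1 X2 : {set V}, X1 \subset X -> X2 \subset X ->
    #|X1| = #|X2| -> #|X1| * 2 <= #|X| ->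
    exists ps : 'I_#|X1| -> V * seq V,
      (forall i, is_path e (ps i) /\
         (((ps i).1 \in X1 /\ pend (ps i) \in X2) \/
          ((ps i).1 \in X2 /\ pend (ps i) \in X1))) /\
      (forall i j, i != j -> [disjoint pverts (ps i) & pverts (ps j)]).

(* G* : G plus a new vertex y* (= None) adjacent to all vertices of Y *)
Definition gstar (e : rel V) (Y : {set V}) : rel (option V) :=
  fun a b => match a, b with
  | Some u, Some v => e u v
  | None, Some v => v \in Y
  | Some u, None => u \in Y
  | None, None => false
  end.

Definition induced_connected (E : rel (option V)) (X : {set option V}) : bool :=
  [forall a in X, forall b in X,
    connect [rel c d | [&& c \in X, d \in X & E c d]] a b].

Definition dcut (E : rel (option V)) (X : {set option V}) : nat :=
  #|[set p : option V * option V | [&& E p.1 p.2, p.1 \in X & p.2 \notin X]]|.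

Definition important (E : rel (option V)) (x y : option V) (X : {set option V}) : bool :=
  [&& x \in X, y \notin X, induced_connected E X &
   ~~ [exists X' : {set option V}, [&& X \proper X', y \notin X',
       induced_connected E X' & dcut E X' <= dcut E X]]].

Definition Zset (E : rel (option V)) (k : nat) (T1 T2 : {set V}) : {set option V} :=
  [set a | [exists x in T1 :|: T2, exists X : {set option V},
      [&& important E (Some x) None X, dcut E X <= 4 * k ^ 2 & a \in X]]].
End Graphs.

(* Main.v *)
Require Import Defs.
From mathcomp Require Import all_boot zify.
Set Implicit Arguments. Unset Strict Implicit. Unset Printing Implicit Defensive.

Lemma ar1 p lam : 2*p <= 0 + lam -> lam <= p -> 0 < lam -> False.
Proof. lia. Qed.
Lemma ar3 p lam n d : 2*p <= n.+1 + lam -> lam < d -> 2 * p <= n + d.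
Proof. lia. Qed.
Lemma ar4 p lam n d d' : 2*p <= n.+1 + lam -> lam <= d -> d <= d'.+1 -> 2 * p.-1 <= n + d'.
Proof. lia. Qed.
Lemma ar5 a b c : a + c <= b + c -> a <= b.
Proof. lia. Qed.

Section Gen.
Variable V : finType.
Notation W := (option V).
Implicit Types (E : rel W) (A B C X S : {set W}).

Definition rst E B : rel W := [rel c d | [&& c \in B, d \in B & E c d]].
Arguments rst E B /.
Definition bnd E X := [set p : W * W | [&& E p.1 p.2, p.1 \in X & p.2 \notin X]].

Lemma dcutE E X : dcut E X = #|bnd E X|. Proof. by []. Qed.

Lemma icP E X : reflect (forall a b, a \in X -> b \in X -> connect (rst E X) a b)
  (induced_connected E X).
Proof.
apply: (iffP forallP) => [H a b aX bX|H a].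
  by move/implyP: (H a) => /(_ aX) /forallP /(_ b) /implyP /(_ bX).
by apply/implyP => aX; apply/forallP => b; apply/implyP => bX; exact: H.
Qed.

Lemma submod E A B : dcut E (A :|: B) + dcut E (A :&: B) <= dcut E A + dcut E B.
Proof.
rewrite !dcutE -cardsUI -(cardsUI (bnd E A)).
apply: leq_add; apply: subset_leq_card; apply/subsetP => [[a b]];
  rewrite !inE /=;
  by case: (E a b); case: (a \in A); case: (a \in B); case: (b \in A); case: (b \in B).
Qed.

Definition comp E B s := [set b | (b \in B) && connect (rst E B) s b].

Lemma comp_sub E B s : comp E B s \subset B.
Proof. by apply/subsetP => b; rewrite inE => /andP []. Qed.

Lemma comp_closed E B s a b : a \in comp E B s -> b \in B -> E a b -> b \in comp E B s.
Proof.
rewrite !inE => /andP [aB ca] bB Eab; rewrite bB /=.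
apply: connect_trans ca _; apply: connect1; by rewrite /= aB bB.
Qed.

Lemma comp_bnd E B s : bnd E (comp E B s) \subset bnd E B.
Proof.
apply/subsetP => [[a b]]; rewrite [_ \in bnd _ B]inE [_ \in bnd _ _]inE /= => /and3P [Eab aC bC].
rewrite Eab (subsetP (comp_sub E B s) _ aC) /=.
apply/negP => bB; move: bC; by rewrite (comp_closed aC bB Eab).
Qed.

Lemma comp_dcut E B s : dcut E (comp E B s) <= dcut E B.
Proof. exact: subset_leq_card (comp_bnd E B s). Qed.

Lemma comp_path E B s a b : a \in comp E B s -> connect (rst E B) a b ->
  connect (rst E (comp E B s)) a b.
Proof.
move=> aC /connectP [p pth ->]; elim: p a aC pth => [|c p IH] a aC /=.
  by rewrite connect0.
case/andP => /and3P [aB cB Eac] pth.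
have cC := comp_closed aC cB Eac.
apply: connect_trans (IH c cC pth); apply: connect1; by rewrite /= aC cC.
Qed.

Lemma rst_sym E B : symmetric E -> symmetric (rst E B).
Proof. move=> sE a b /=; by rewrite sE andbCA. Qed.

Lemma comp_conn E B s : symmetric E -> s \in B -> induced_connected E (comp E B s).
Proof.
move=> sE sB; have sC : s \in comp E B s by rewrite inE sB connect0.
apply/icP => a b aC bC.
have: connect (rst E B) a s.
  rewrite (sym_connect_sym (rst_sym B sE)).
  by move: aC; rewrite inE => /andP [].
move/(comp_path aC) => h; apply: connect_trans h _.
by apply: comp_path sC _; move: bC; rewrite inE => /andP [].
Qed.

Lemma conn_mono E X B a b : X \subset B -> connect (rst E X) a b -> connect (rst E B) a b.
Proof.
move=> XB; apply: connect_sub => c d /and3P [cX dX Ecd]; apply: connect1.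
by rewrite /= (subsetP XB _ cX) (subsetP XB _ dX).
Qed.

Lemma conn_in_comp E X B s : induced_connected E X -> X \subset B -> s \in X ->
  X \subset comp E B s.
Proof.
move=> /icP cX XB sX; apply/subsetP => b bX.
by rewrite inE (subsetP XB _ bX) (conn_mono XB (cX _ _ sX bX)).
Qed.

Lemma bnd0_closed E C X a b : bnd E C = set0 -> a \in C -> connect (rst E X) a b -> b \in C.
Proof.
move=> b0 aC /connectP [p pth ->]; elim: p a aC pth => [|c p IH] a aC //=.
case/andP => /and3P [_ _ Eac] pth; apply: IH pth.
apply/negPn/negP => cC.
have : (a, c) \in bnd E C by rewrite inE /= Eac aC cC.
by rewrite b0 inE.
Qed.



Definition maxl E X := ~~ [exists X' : {set W}, [&& X \proper X', None \notin X',
   induced_connected E X' & dcut E X' <= dcut E X]].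
Definition FF E S p := [set X : {set W} | [&& S \subset X, None \notin X,
   induced_connected E X, maxl E X & dcut E X <= p]].
Definition del E (u v : W) : rel W :=
  [rel a b | E a b && ~~ (((a == u) && (b == v)) || ((a == v) && (b == u)))].

Lemma del_sym E u v : symmetric E -> symmetric (del E u v).
Proof.
move=> sE a b; rewrite /del /= sE.
by case: (a == u); case: (a == v); case: (b == u); case: (b == v); rewrite ?andbF.
Qed.

Lemma del_sub E u v : subrel (del E u v) E.
Proof. by move=> a b /andP []. Qed.

Lemma del_dcut_le E u v A : dcut E A <= (dcut (del E u v) A).+1.
Proof.
rewrite !dcutE -addn1 -(cards1 (if u \in A then (u, v) else (v, u))).
apply: leq_trans (leq_card_setU _ _).1; apply: subset_leq_card.
apply/subsetP => [[a b]]; rewrite !inE /= => /and3P [Eab aA bA]; rewrite /del /=.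
case: (boolP (((a == u) && (b == v)) || ((a == v) && (b == u)))) => h; last first.
  by rewrite Eab aA bA.
case/orP: h => /andP [/eqP au /eqP bv]; subst a b.
  by rewrite aA eqxx orbT.
by rewrite (negbTE bA) eqxx orbT.
Qed.

Lemma del_dcut_lt E u v X : u \in X -> v \notin X -> E u v ->
  (dcut (del E u v) X).+1 <= dcut E X.
Proof.
move=> uX vX Euv; rewrite !dcutE; apply: proper_card; rewrite properE; apply/andP; split.
  apply/subsetP => [[a b]]; rewrite !inE /= => /and3P [/andP [Eab _] aA bA].
  by rewrite Eab aA bA.
apply/subsetPn; exists (u, v); first by rewrite inE /= Euv uX vX.
by rewrite inE /= /del /= !eqxx /= andbF.
Qed.

Lemma ic_mono E E' X : subrel E' E -> induced_connected E' X -> induced_connected E X.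
Proof.
move=> sub /icP h; apply/icP => a b aX bX; apply: connect_sub (h a b aX bX).
by move=> c d /and3P [cX dX Ecd]; apply: connect1; rewrite /= cX dX (sub _ _ Ecd).
Qed.

Lemma del_ic E u v X : v \notin X -> induced_connected (del E u v) X = induced_connected E X.
Proof.
move=> vX; have eq : rst (del E u v) X =2 rst E X.
  move=> a b /=; case aX: (a \in X); case bX: (b \in X) => //=.
  have av : (a == v) = false by apply/eqP => e; move: vX; rewrite -e aX.
  have bv : (b == v) = false by apply/eqP => e; move: vX; rewrite -e bX.
  by rewrite /del /= av bv !andbF andbT.
apply/icP/icP => h a b aX bX; first by rewrite -(eq_connect eq) h.
by rewrite (eq_connect eq) h.
Qed.

Lemma countF n E S p : symmetric E -> S != set0 -> induced_connected E S ->
  (forall A, S \subset A -> None \notin A -> 2 * p <= n + dcut E A) ->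
  #|FF E S p| <= 2 ^ n.
Proof.
elim: n.+1 {-2}n (ltnSn n) E S p => // m IHm {}n ltnm E S p sE /set0Pn [s sS] cS hb.
case: (boolP (None \in S)) => NS.
  suff -> : FF E S p = set0 by rewrite cards0.
  apply/setP => X; rewrite !inE; apply/negbTE; apply/negP => /and5P [SX NX _ _ _].
  by move: NX; rewrite (subsetP SX _ NS).
pose adm A := (S \subset A) && (None \notin A).
have admS : adm S by rewrite /adm subxx NS.
case: (arg_minnP (fun A => dcut E A) admS) => A0 admA0 minA0.
set lam := dcut E A0 in minA0.
have PA0 : adm A0 && (dcut E A0 == lam) by rewrite admA0 eqxx.
case: (@arg_maxnP _ A0 (fun A => adm A && (dcut E A == lam)) (fun A : {set W} => #|A|) PA0) => R /andP [admR /eqP cR] maxR.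
have admU : forall A, adm A -> adm (A :|: R).
  move=> A /andP [SA NA]; case/andP: admR => SR NR.
  by rewrite /adm (subset_trans SA (subsetUl _ _)) inE negb_or NA NR.
have admI : forall A, adm A -> adm (A :&: R).
  move=> A /andP [SA NA]; case/andP: admR => SR NR.
  by rewrite /adm subsetI SA SR inE negb_and NA.
have R2 : forall A, adm A -> dcut E A <= lam -> A \subset R.
  move=> A admA cA.
  have h1 := submod E A R; have h2 := minA0 _ (admI _ admA).
  have h3 := minA0 _ (admU _ admA).
  have cU : dcut E (A :|: R) == lam by rewrite eqn_leq h3 andbT; lia.
  have := maxR (A :|: R); rewrite admU // cU => /(_ isT) hc.
  have : R == A :|: R by rewrite eqEcard subsetUr; exact: hc.
  by move/eqP ->; rewrite subsetUl.
case/andP: (admR) => SR NR.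
set R' := comp E R s.
have sR' : s \in R' by rewrite inE (subsetP SR _ sS) connect0.
have SR' : S \subset R' by apply: conn_in_comp.
have cR'c : induced_connected E R' by apply: comp_conn => //; apply: (subsetP SR).
have NR' : None \notin R' by apply/negP => /(subsetP (comp_sub _ _ _)); apply/negP.
have admR' : adm R' by rewrite /adm SR' NR'.
have cR' : dcut E R' = lam.
  by apply/eqP; rewrite eqn_leq minA0 // andbT -cR comp_dcut.
have R3 : forall X, X \in FF E S p -> R' \subset X.
  move=> X; rewrite inE => /and5P [SX NX cX mX _].
  have admX : adm X by rewrite /adm SX NX.
  have h1 := submod E X R; have h2 := minA0 _ (admI _ admX).
  set C := comp E (X :|: R) s.
  have XC : X \subset C by apply: conn_in_comp => //; [apply: subsetUl | apply: (subsetP SX)].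
  have dC : dcut E C <= dcut E X.
    apply: leq_trans (comp_dcut E (X :|: R) s) _.
    rewrite -(leq_add2r (dcut E (X :&: R))); apply: leq_trans h1 _.
    by rewrite cR leq_add2l.
  have cC : induced_connected E C.
    by apply: comp_conn => //; rewrite inE (subsetP SX _ sS).
  have NC : None \notin C.
    by apply/negP => /(subsetP (comp_sub _ _ _)); apply/negP; case/andP: (admU _ admX).
  have CX : C \subset X.
    apply/negPn/negP => nCX; apply: (negP mX); apply/existsP; exists C.
    by rewrite properE XC nCX NC cC dC.
  apply: subset_trans CX; apply: conn_in_comp => //; exact: subset_trans (comp_sub _ _ _) (subsetUr _ _).
have hbR := hb R' SR' NR'; rewrite cR' in hbR.
case: (ltnP p lam) => hlp.
  suff -> : FF E S p = set0 by rewrite cards0.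
  apply/setP => X; rewrite inE [in RHS]inE; apply/negbTE; apply/negP => /and5P [SX NX _ _ dX].
  have := minA0 X; rewrite /adm SX NX => /(_ isT) h.
  by have := leq_trans h dX; rewrite leqNgt hlp.
case: (posnP lam) => hl0.
  apply: (@leq_trans #|[set R']|); last by rewrite cards1 expn_gt0.
  apply: subset_leq_card; apply/subsetP => X FX; rewrite inE; apply/eqP.
  have R'X := R3 _ FX.
  apply/eqP; rewrite eqEsubset R'X andbT.
  move: FX; rewrite inE => /and5P [_ _ /icP cX _ _].
  have b0 : bnd E R' = set0 by apply/eqP; rewrite -cards_eq0 -dcutE cR' hl0.
  apply/subsetP => b bX; apply: (bnd0_closed b0 sR'); apply: cX => //.
  by apply: (subsetP R'X).
have /set0Pn [[u v]] : bnd E R' != set0 by rewrite -card_gt0 -dcutE cR'.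
rewrite inE /= => /and3P [Euv uR' vR'].
case: n ltnm hb hbR => [|n'] ltnm hb hbR; first by case: (ar1 hbR hlp hl0).
set S' := comp E (R' :|: [set v]) s.
set E' := del E u v.
have R'S' : R' \subset S' by apply: conn_in_comp => //; rewrite subsetUl.
have vS' : v \in S'.
  by apply: (comp_closed (subsetP R'S' _ uR')) => //; rewrite !inE eqxx orbT.
have uR : u \in R by exact: (subsetP (comp_sub E R s) _ uR').
have cover : FF E S p \subset FF E S' p :|: FF E' R' p.-1.
  apply/subsetP => X FX; have R'X := R3 _ FX.
  move: FX; rewrite inE => /and5P [SX NX cX mX dX].
  case: (boolP (v \in X)) => vX.
    rewrite inE; apply/orP; left; rewrite inE NX cX mX dX andbT.
    rewrite andbT; apply: subset_trans (comp_sub E (R' :|: [set v]) s) _; by rewrite subUset R'X sub1set vX.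
  have uX := subsetP R'X _ uR'.
  have hlt := del_dcut_lt uX vX Euv.
  rewrite inE; apply/orP; right; rewrite inE R'X NX /E' del_ic //= cX /=.
  apply/andP; split; last first.
    rewrite -ltnS prednK; [exact: leq_trans hlt dX | exact: leq_trans hl0 hlp].
  apply/negP => /existsP [X' /and4P [pX NX' cX' dX']].
  apply: (negP mX); apply/existsP; exists X'; rewrite pX NX' (ic_mono (@del_sub E u v) cX') /=.
  apply: leq_trans (del_dcut_le E u v X') _; apply: leq_trans hlt; by rewrite ltnS.
apply: leq_trans (subset_leq_card cover) _.
apply: leq_trans (leq_card_setU _ _).1 _.
rewrite expnS mul2n -addnn; apply: leq_add.
- apply: (IHm n' ltnm) => //.
  + by apply/set0Pn; exists v.
  + by apply: comp_conn => //; rewrite inE sR'.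
  move=> A S'A NA; have vA := subsetP S'A _ vS'.
  have admA : adm A by rewrite /adm NA (subset_trans SR' (subset_trans R'S' S'A)).
  case: (ltnP lam (dcut E A)) => hA; first exact: ar3 hbR hA.
  have := R2 _ admA hA => /subsetP /(_ _ vA) vR.
  by move: vR'; rewrite (comp_closed uR' vR Euv).
- apply: (IHm n' ltnm) => //.
  + exact: del_sym.
  + by apply/set0Pn; exists s.
  + by rewrite /E' del_ic.
  move=> A R'A NA.
  have admA : adm A by rewrite /adm NA (subset_trans SR' R'A).
  exact: ar4 hbR (minA0 _ admA) (del_dcut_le E u v A).
Qed.

End Gen.

Lemma card_bigcup_le (I T : finType) (P : {pred I}) (G : I -> {set T}) :
  #|\bigcup_(i in P) G i| <= \sum_(i in P) #|G i|.
Proof.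
apply: (big_rec2 (fun (a : {set T}) b => #|a| <= b)); first by rewrite cards0.
move=> i a b _ h; apply: leq_trans (leq_card_setU _ _).1 _; by rewrite leq_add2l.
Qed.

Lemma sub_card (T : finType) (A : {set T}) m : m <= #|A| ->
  exists2 B : {set T}, B \subset A & #|B| = m.
Proof.
move=> hm; exists [set x in take m (enum A)].
  by apply/subsetP => x; rewrite inE => /mem_take; rewrite mem_enum.
rewrite cardsE; have /card_uniqP -> : uniq (take m (enum A)).
  by apply: take_uniq; exact: enum_uniq.
by rewrite size_takel // -cardE.
Qed.

Lemma ar6 M y a b y' : 2 * M + 2 <= y -> a + b <= M -> a + y' = y -> (b + 1) * 2 <= y'.
Proof. lia. Qed.

Section Paths.
Variable V : finType.
Variable e : rel V.
Variable zv : pred V.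

Fixpoint exitp (a0 : V) (p : seq V) : V * V :=
  match p with
  | [::] => (a0, a0)
  | b :: p' => if has zv p then exitp b p' else (a0, b)
  end.

Lemma exitpP a0 p : path e a0 p -> has zv (a0 :: p) -> ~~ zv (last a0 p) ->
  [/\ e (exitp a0 p).1 (exitp a0 p).2, zv (exitp a0 p).1, ~~ zv (exitp a0 p).2
    & (exitp a0 p).1 \in a0 :: p].
Proof.
elim: p a0 => [|b p IH] a0 /=.
  by move=> _; rewrite orbF => ->.
case/andP => eab pth hz hl.
case: (boolP (zv b || has zv p)) => h.
  have [h1 h2 h3 h4] := IH b pth h hl.
  by split => //; rewrite inE h4 orbT.
move: hz; rewrite (negbTE h) orbF => za.
by split => //=; rewrite ?inE ?eqxx //; move: h; rewrite negb_or => /andP [].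
Qed.
End Paths.

Lemma ar7 s y : s * 2 <= y -> s <= y - s.
Proof. lia. Qed.

Unset Implicit Arguments.
Set Strict Implicit.

Theorem lemma7 (V : finType) (e : rel V) (k t : nat) (T1 T2 Y : {set V}) :
  simple_graph e -> bipartite e ->
  [disjoint T1 & T2] -> #|T1| + #|T2| <= t ->
  well_connected e Y ->
  2 * (4 * k ^ 2) * t * 4 ^ (4 * k ^ 2) + 2 <= #|Y| ->
  exists u v : V, [/\ e u v,
    Some u \notin Zset (gstar e Y) k T1 T2 &
    Some v \notin Zset (gstar e Y) k T1 T2].
Proof.
move=> [irr sym] _ _ hT wc hY.
set p := 4 * k ^ 2 in hY *.
set E := gstar e Y.
have sE : symmetric E by move=> [a|] [b|] //=; exact: sym.
set Z := Zset E k T1 T2.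
set Fam := \bigcup_(x in T1 :|: T2) FF E [set Some x] p.
have FamE : forall X, X \in Fam -> [&& dcut E X <= p, None \notin X & X \subset Z].
  move=> X /bigcupP [x xT]; rewrite inE => /and5P [sX NX cX mX dX].
  rewrite dX NX /=; apply/subsetP => a aX; rewrite /Z /Zset inE.
  apply/existsP; exists x; rewrite xT /=; apply/existsP; exists X.
  rewrite aX andbT dX andbT; apply/and4P; split => //; by rewrite -sub1set.
have ZFam : forall a, a \in Z -> exists2 X, X \in Fam & a \in X.
  move=> a; rewrite /Z /Zset inE => /existsP [x /andP [xT /existsP [X /and3P [imp dX aX]]]].
  exists X => //; apply/bigcupP; exists x => //.
  case/and4P: imp => xX NX cX mX; rewrite inE; apply/and5P; split => //.
  by rewrite sub1set.
have NZ : None \notin Z.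
  by apply/negP => /ZFam [X /FamE /and3P [_ NX _]]; rewrite (negbTE NX).
have cFam : #|Fam| <= t * 4 ^ p.
  apply: leq_trans (card_bigcup_le _ _) _.
  apply: (@leq_trans (\sum_(x in T1 :|: T2) 4 ^ p)).
    apply: leq_sum => x _.
    have -> : 4 ^ p = 2 ^ (2 * p) by rewrite expnM.
    apply: countF => //.
    - by apply/set0Pn; exists (Some x); rewrite set11.
    - by apply/icP => a b; rewrite !inE => /eqP -> /eqP ->; exact: connect0.
    - move=> A _ _; exact: leq_addr.
  rewrite sum_nat_const leq_mul2r; apply/orP; right.
  exact: leq_trans (leq_card_setU _ _).1 hT.
have cB : #|bnd E Z| <= p * (t * 4 ^ p).
  have : bnd E Z \subset \bigcup_(X in Fam) bnd E X.
    apply/subsetP => [[a b]]; rewrite inE /= => /and3P [Eab aZ bZ].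
    have [X XF aX] := ZFam _ aZ; apply/bigcupP; exists X => //.
    rewrite inE /= Eab aX /=; apply/negP => bX; move: bZ.
    by have /and3P [_ _ XZ] := FamE _ XF; rewrite (subsetP XZ _ bX).
  move/subset_leq_card/leq_trans; apply; apply: leq_trans (card_bigcup_le _ _) _.
  apply: (@leq_trans (\sum_(X in Fam) p)).
    by apply: leq_sum => X XF; case/and3P: (FamE _ XF).
  by rewrite sum_nat_const mulnC leq_mul2l cFam orbT.
set zv := fun a : V => Some a \in Z.
set Zv := [set a : V | zv a].
set Bset := [set q : V * V | [&& e q.1 q.2, zv q.1 & ~~ zv q.2]].
set Aset := Y :&: Zv.
set Y' := Y :\: Zv.
have cAB : #|Aset| + #|Bset| <= #|bnd E Z|.
  pose f1 := fun y : V => (Some y, @None V).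
  pose f2 := fun q : V * V => (Some q.1, Some q.2).
  have i1 : injective f1 by move=> a b [].
  have i2 : injective f2 by move=> [a b] [c d] /= [-> ->].
  rewrite -(card_imset Aset i1) -(card_imset Bset i2).
  have I0 : f1 @: Aset :&: f2 @: Bset = set0.
    apply/setP => x; rewrite !inE; apply/negbTE; apply/negP.
    by case/andP => /imsetP [y _ ->] /imsetP [q _ []].
  have -> : #|f1 @: Aset| + #|f2 @: Bset| = #|f1 @: Aset :|: f2 @: Bset|.
    by rewrite cardsU I0 cards0 subn0.
  apply: subset_leq_card; apply/subsetP => x; rewrite inE.
  case/orP => /imsetP [y yA ->]; rewrite inE /=.
    by move: yA; rewrite inE [y \in Zv]inE => /andP [yY yZ]; apply/and3P; split.
  by move: yA; rewrite [_ \in Bset]inE => /and3P [q1 q2 q3]; apply/and3P; split.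
have cY : #|Aset| + #|Y'| = #|Y| by rewrite /Aset /Y' cardsID.
have hY' : 2 * (p * (t * 4 ^ p)) + 2 <= #|Y| by rewrite (mulnA 2 p (t * 4 ^ p)) (mulnA (2 * p) t (4 ^ p)).
have hs : (#|Bset| + 1) * 2 <= #|Y'| := ar6 hY' (leq_trans cAB cB) cY.
have [X1 X1Y' cX1] := @sub_card _ Y' (#|Bset| + 1) (leq_trans (leq_pmulr _ (isT : 0 < 2)) hs).
have [X2 X2Y' cX2] : exists2 X2 : {set V}, X2 \subset Y' :\: X1 & #|X2| = #|Bset| + 1.
  by apply: (@sub_card _ (Y' :\: X1) (#|Bset| + 1)); rewrite cardsDS // cX1; apply: ar7.
have Y'Y : Y' \subset Y by apply: subsetDl.
have X2Y'' : X2 \subset Y' := subset_trans X2Y' (subsetDl _ _).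
have [ps [hps hdis]] := wc X1 X2 (subset_trans X1Y' Y'Y) (subset_trans X2Y'' Y'Y)
  (etrans cX1 (esym cX2)) (leq_trans (leq_trans (eq_leq (congr1 (muln^~ 2) cX1)) hs)
                           (subset_leq_card Y'Y)).
have nz1 : forall y, y \in X1 -> ~~ zv y.
  by move=> y /(subsetP X1Y'); rewrite !inE => /andP [].
have nz2 : forall y, y \in X2 -> ~~ zv y.
  by move=> y /(subsetP X2Y''); rewrite !inE => /andP [].
have dX : forall y, y \in X2 -> y \notin X1.
  by move=> y /(subsetP X2Y'); rewrite inE => /andP [].
have ends : forall i, [/\ is_path e (ps i), ~~ zv (ps i).1, ~~ zv (pend (ps i))
                         & (ps i).2 != [::]].
  move=> i; case: (hps i) => ip [[h1 h2]|[h1 h2]]; split => //;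
    try (by apply: nz1); try (by apply: nz2);
    apply/eqP => hn; move: h2; rewrite /pend hn /= => h2.
  - by move: (dX _ h2); rewrite h1.
  - by move: (dX _ h1); rewrite h2.
case: (boolP [exists i, ~~ has zv (pverts (ps i))]).
  case/existsP => i hi; case: (ends i) => ip z1 _ ne.
  move: ip hi ne z1; case: (ps i) => a0 [|b q] //= /andP [/andP [eab _] _].
  rewrite negb_or negb_or => /andP [za /andP [zb _]] _ _.
  by exists a0, b; split.
rewrite negb_exists => /forallP allT.
pose g := fun i => exitp zv (ps i).1 (ps i).2.
have hg : forall i, g i \in Bset /\ (g i).1 \in pverts (ps i).
  move=> i; case: (ends i) => /andP [pth _] z1 z2 _.
  have := allT i; rewrite negbK => ht.
  have [h1 h2 h3 h4] := exitpP pth ht z2.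
  by split => //; rewrite inE h1 h2 h3.
have ig : injective g.
  move=> i j hij; apply/eqP; apply/negPn/negP => nij.
  have dij := hdis i j nij.
  have [_ hi] := hg i; have [_ hj] := hg j.
  rewrite hij in hi.
  by rewrite (disjointFr dij hi) in hj.
have : #|[set: 'I_#|X1|]| <= #|Bset|.
  rewrite -(card_imset _ ig); apply: subset_leq_card.
  by apply/subsetP => _ /imsetP [i _ ->]; case: (hg i).
by rewrite cardsT card_ord cX1 addn1 ltnn.
Qed.
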